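(* Let $n\geq 1$. Let $T_n$ be the set of triply rooted trees on $[n]=\{1,\dots,n\}$, and let $Q_n$ be the set of triples $(D,D',D'')$ of doubly rooted trees such that the vertex sets of $D$, $D'$, $D''$ form a composition of $[n]$ and $D$ is nonempty. Then there is a bijection between $Q_n$ and $T_n$.
   Context: A doubly rooted tree on a finite set $S$ is a labeled tree with vertex set $S$ together with two distinguished vertices $r_1$ (the first root) and $r_2$ (the second root), not necessarily distinct. A triply rooted tree on $S$ is a labeled tree with vertex set $S$ together with three distinguished vertices $r_1,r_2,r_3$ (first, second, third root), not necessarily distinct. The empty doubly rooted tree (on the empty vertex set) is allowed. A triple $(X,Y,Z)$ of subsets of a set $S$ is a composition of $S$ if $X,Y,Z$ are pairwise disjoint and $X\cup Y\cup Z=S$ (some of them may be empty). *)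

(* Defs.v *)
From mathcomp Require Import all_boot.
Set Implicit Arguments. Unset Strict Implicit. Unset Printing Implicit Defensive.

Section Trees.
Variable n : nat.

Definition adj (E : {set {set 'I_n}}) : rel 'I_n :=
  fun x y => [set x; y] \in E.

Definition is_graph_on (S : {set 'I_n}) (E : {set {set 'I_n}}) : bool :=
  [forall e in E, (e \subset S) && (#|e| == 2)].

Definition connected_on (S : {set 'I_n}) (E : {set {set 'I_n}}) : Prop :=
  forall x y, x \in S -> y \in S -> connect (adj E) x y.

Definition acyclic (E : {set {set 'I_n}}) : Prop :=
  ~ exists s : seq 'I_n, [&& uniq s, 2 < size s & cycle (adj E) s].

(* a (labeled) tree with vertex set S and edge set E: connected acyclic graph;
   the empty vertex set gives the empty tree *)
Definition is_tree (S : {set 'I_n}) (E : {set {set 'I_n}}) : Prop :=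
  [/\ is_graph_on S E, connected_on S E & acyclic E].

(* raw doubly rooted tree: (vertex set, edge set, roots (r1, r2));
   roots are None exactly for the empty tree *)
Definition DRT_raw : Type :=
  ({set 'I_n} * {set {set 'I_n}} * option ('I_n * 'I_n))%type.

Definition drt_vertices (D : DRT_raw) : {set 'I_n} := D.1.1.

Definition valid_drt (D : DRT_raw) : Prop :=
  let: (V, E, r) := D in
  is_tree V E /\
  match r with
  | None => V = set0
  | Some (r1, r2) => r1 \in V /\ r2 \in V
  end.

Definition Qn_pred (q : DRT_raw * DRT_raw * DRT_raw) : Prop :=
  let: (D, D', D'') := q in
  [/\ valid_drt D, valid_drt D', valid_drt D'',
      [/\ [disjoint drt_vertices D & drt_vertices D'],
          [disjoint drt_vertices D & drt_vertices D''],
          [disjoint drt_vertices D' & drt_vertices D''] &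
          drt_vertices D :|: drt_vertices D' :|: drt_vertices D'' = [set: 'I_n]]
      & drt_vertices D != set0].

Definition Qn : Type := {q : DRT_raw * DRT_raw * DRT_raw | Qn_pred q}.

Definition Tn : Type :=
  {t : {set {set 'I_n}} * 'I_n * 'I_n * 'I_n | is_tree [set: 'I_n] t.1.1.1}.

End Trees.

(* Main.v *)
Require Import Defs.
From mathcomp Require Import all_boot zify.
From Stdlib Require Import ClassicalEpsilon ProofIrrelevance.
Set Implicit Arguments. Unset Strict Implicit. Unset Printing Implicit Defensive.

Section Basic.
Variable n : nat.
Implicit Types (E F : {set {set 'I_n}}) (S : {set 'I_n}).

Definition Ew E (w : 'I_n) := [set f in E | w \notin f].

Lemma adj_sym E : symmetric (adj E).
Proof. by move=> x y; rewrite /adj setUC. Qed.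

Lemma conn_sym E x y : connect (adj E) x y = connect (adj E) y x.
Proof. exact: (sym_connect_sym (adj_sym E)). Qed.

Lemma conn_closed (T : finType) (e : rel T) (P : T -> Prop) x y :
  (forall a b, P a -> e a b -> P b) -> P x -> connect e x y -> P y.
Proof.
move=> H Px /connectP [p pp ->]; elim: p x Px pp => //= z p IH x Px /andP [exz pp].
exact: IH (H _ _ Px exz) pp.
Qed.

Lemma conn_mono_in (T : finType) (e e' : rel T) (P : T -> Prop) x y :
  (forall a b, P a -> e a b -> P b /\ e' a b) -> P x -> connect e x y -> connect e' x y.
Proof.
move=> H Px c.
suff [] : P y /\ connect e' x y by [].
apply: (conn_closed (P := fun z => P z /\ connect e' x z)) c; last by split => //; exact: connect0.
move=> a b [Pa ca] eab; case: (H a b Pa eab) => Pb e'ab; split => //.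
exact: connect_trans ca (connect1 e'ab).
Qed.

Lemma conn_mono (T : finType) (e e' : rel T) x y :
  subrel e e' -> connect e x y -> connect e' x y.
Proof. by move=> H; apply: (conn_mono_in (P := fun _ => True)) => // a b _ /H. Qed.

Lemma conn_hom (T T' : finType) (e : rel T) (e' : rel T') (f : T -> T') x y :
  (forall a b, e a b -> f a = f b \/ e' (f a) (f b)) -> connect e x y -> connect e' (f x) (f y).
Proof.
move=> H; apply: (conn_closed (P := fun z => connect e' (f x) (f z))); last exact: connect0.
move=> a b ca /H [<-|eab] //; exact: connect_trans ca (connect1 eab).
Qed.

Lemma adj_mono E F : E \subset F -> subrel (adj E) (adj F).
Proof. by move=> sEF x y; rewrite /adj => /(subsetP sEF). Qed.

Lemma graphP S E f : is_graph_on S E -> f \in E -> f \subset S /\ #|f| = 2.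
Proof. by rewrite /is_graph_on => /forallP /(_ f) /implyP H /H /andP [? /eqP]. Qed.

Lemma adj_neq S E x y : is_graph_on S E -> adj E x y -> x != y.
Proof. by rewrite /adj => g /(graphP g) [_]; rewrite cards2; case: (x != y). Qed.

Lemma adj_in S E x y : is_graph_on S E -> adj E x y -> (x \in S) && (y \in S).
Proof.
rewrite /adj => g /(graphP g) [/subsetP s _].
by rewrite !s // !inE eqxx ?orbT.
Qed.

Definition bridges E := forall x y, [set x; y] \in E -> ~~ connect (adj (E :\ [set x; y])) x y.

Lemma acyclic_bridges S E : is_graph_on S E -> acyclic E -> bridges E.
Proof.
move=> g ac x y xyE; apply/negP => /connectP [p pp lp].
have xy : x != y by apply: (adj_neq g).
move: lp; case/shortenP: pp => p' pp' up' _ lp'.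
case: p' pp' up' lp' => [|z [|z' p'']] /= pp' up' lp'.
- by rewrite lp' eqxx in xy.
- by move: pp'; rewrite -lp' andbT /adj !inE eqxx.
apply: ac; exists [:: x, z, z' & p'']; apply/and3P; split => //.
rewrite /cycle rcons_path; apply/andP; split.
  apply: (sub_path (adj_mono (subD1set E [set x; y]))); exact: pp'.
by rewrite /= -lp' adj_sym.
Qed.

Lemma pathF E (e : {set 'I_n}) a b t : t != [::] -> all (fun z => z \notin e) t ->
  path (adj E) a (rcons t b) -> path (adj (E :\ e)) a (rcons t b).
Proof.
elim: t a => // z t IH a _ /= /andP [ze at'] /andP [aaz pt].
have ne : forall c, [set c; z] != e.
  by move=> c; apply: contraNneq ze => <-; rewrite !inE eqxx orbT.
have -> : adj (E :\ e) a z by rewrite /adj in_setD1 ne; exact: aaz.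
rewrite /=.
case: t IH at' pt => [|w t] IH at' pt.
  rewrite /= andbT /adj in_setD1 setUC ne /=; move: pt => /= /andP [].
  by rewrite adj_sym.
exact: IH.
Qed.

Lemma bridges_acyclic E : bridges E -> acyclic E.
Proof.
move=> br [s /and3P [us ss cs]].
case: s us ss cs => [|x [|y t]] //= us ss cs.
case/andP: cs => axy pt.
move: (br x y axy); apply/negP/negPn.
rewrite conn_sym; apply/connectP; exists (rcons t x); last by rewrite last_rcons.
apply: pathF => //; first by case: t ss {us pt}.
move: us; rewrite !inE negb_or => /andP [/andP [xy xt] /andP [yt _]].
apply/allP => z zt; rewrite !inE negb_or.
by apply/andP; split; apply/negP => /eqP zx; [move: xt | move: yt]; rewrite -zx zt.
Qed.

End Basic.

Section Nb.
Variable n : nat.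
Implicit Types (E F : {set {set 'I_n}}) (S : {set 'I_n}).

Lemma nb_exists E w x : connect (adj E) w x -> x != w ->
  exists2 y, [set w; y] \in E & connect (adj (Ew E w)) y x.
Proof.
move=> /connectP [p pp lp] xw.
move: lp; case/shortenP: pp => p' pp' up' _ lp'.
case: p' pp' up' lp' => [|y p''] /= pp' up' lp'; first by rewrite lp' eqxx in xw.
case/andP: pp' => wy pp''; exists y => //.
apply/connectP; exists p'' => //.
apply: (@sub_in_path _ (predC1 w) (adj E) (adj (Ew E w))) => //.
  move=> a b /= aw bw; rewrite /adj /Ew !inE => ->; rewrite /= negb_or.
  by rewrite eq_sym (negbTE aw) eq_sym (negbTE bw).
case/andP: up' => wn _; apply/allP => z zin /=.
by apply: contraNneq wn => <-.
Qed.

Lemma isolated E w x : connect (adj (Ew E w)) w x -> x = w.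
Proof.
case/connectP => -[|y p] /= pp -> //.
by move: pp; rewrite /adj /Ew !inE eqxx /= andbF.
Qed.

Lemma Ew_sub E w : Ew E w \subset E.
Proof. by apply/subsetP => f; rewrite inE => /andP []. Qed.

Lemma nb_unique S E w y z : is_graph_on S E -> acyclic E ->
  [set w; y] \in E -> [set w; z] \in E -> connect (adj (Ew E w)) y z -> y = z.
Proof.
move=> g ac wy wz c; apply/eqP/negPn/negP => yz.
apply: (negP (acyclic_bridges g ac wy)).
apply: (@connect_trans _ _ z w y).
  apply: connect1; rewrite /adj in_setD1 wz andbT.
  apply: contra yz => /eqP e.
  have : z \in [set w; y] by rewrite -e !inE eqxx orbT.
  rewrite !inE => /orP [/eqP zw|/eqP ->] //.
  by have := adj_neq g wz; rewrite zw eqxx.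
rewrite conn_sym; apply: conn_mono c => a b; rewrite /adj /Ew !inE => /andP [ab wn].
rewrite ab andbT; apply/negP => /eqP eab; move: wn.
have : w \in [set a; b] by rewrite eab !inE eqxx.
by rewrite !inE => ->.
Qed.

Lemma tree_acyclic S E : is_tree S E -> acyclic E. Proof. by case. Qed.
Lemma tree_graph S E : is_tree S E -> is_graph_on S E. Proof. by case. Qed.
Lemma tree_conn S E x y : is_tree S E -> x \in S -> y \in S -> connect (adj E) x y.
Proof. by case=> _ c _; apply: c. Qed.

Lemma glue_br S1 S2 E1 E2 (u v a b : 'I_n) : [disjoint S1 & S2] -> is_tree S1 E1 ->
  is_graph_on S2 E2 -> u \in S1 -> v \in S2 -> [set a; b] \in E1 ->
  ~~ connect (adj ((E1 :|: E2 :|: [set [set u; v]]) :\ [set a; b])) a b.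
Proof.
move=> d t1 g2 u1 v2 ab1.
have [g1 _ ac1] := t1.
have [/subsetP sab _] := graphP g1 ab1.
have a1 : a \in S1 by apply: sab; rewrite !inE eqxx.
have b1 : b \in S1 by apply: sab; rewrite !inE eqxx orbT.
apply/negP => c.
apply: (negP (acyclic_bridges g1 ac1 ab1)).
have := conn_hom (f := fun z => if z \in S1 then z else u) (e' := adj (E1 :\ [set a; b])) _ c.
rewrite a1 b1; apply.
move=> p q; rewrite /adj !inE => /andP [ne /orP [/orP [pq1|pq2]|pquv]].
- have [/subsetP s _] := graphP g1 pq1.
  rewrite !s ?inE ?eqxx ?orbT //; right; by rewrite ne.
- have [/subsetP s _] := graphP g2 pq2.
  rewrite !(disjointFl d) ?s ?inE ?eqxx ?orbT //; by left.
- move/eqP: pquv => pquv.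
  have pin : p \in [set u; v] by rewrite -pquv !inE eqxx.
  have qin : q \in [set u; v] by rewrite -pquv !inE eqxx orbT.
  have vn : v \in S1 = false by apply: (disjointFl d).
  left; move: pin qin; rewrite !inE => /orP [/eqP ->|/eqP ->] /orP [/eqP ->|/eqP ->];
  by rewrite ?u1 ?vn.
Qed.

Lemma glue_tree S1 S2 E1 E2 (u v : 'I_n) : [disjoint S1 & S2] -> is_tree S1 E1 ->
  is_tree S2 E2 -> u \in S1 -> v \in S2 ->
  is_tree (S1 :|: S2) (E1 :|: E2 :|: [set [set u; v]]).
Proof.
move=> d t1 t2 u1 v2.
have [g1 c1 ac1] := t1; have [g2 c2 ac2] := t2.
have uv : u != v by apply: contraTneq v2 => <-; rewrite (disjointFr d).
set E := E1 :|: E2 :|: _.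
have s1 : E1 \subset E by rewrite /E -setUA subsetUl.
have s2 : E2 \subset E by rewrite /E -setUA setUCA subsetUl.
have euv : adj E u v by rewrite /adj /E !inE eqxx orbT.
split.
- apply/forallP => f; apply/implyP; rewrite !inE => /orP [/orP [f1|f2]|/eqP ->].
  + have [sf cf] := graphP g1 f1; by rewrite cf eqxx (subset_trans sf (subsetUl _ _)).
  + have [sf cf] := graphP g2 f2; by rewrite cf eqxx (subset_trans sf (subsetUr _ _)).
  + rewrite cards2 uv andbT; apply/subsetP => z; rewrite !inE => /orP [/eqP ->|/eqP ->];
    by rewrite ?u1 ?v2 ?orbT.
- have h12 : forall x y, x \in S1 -> y \in S2 -> connect (adj E) x y.
    move=> x y x1 y2; apply: (connect_trans (y := u)).
      exact: conn_mono (adj_mono s1) (c1 _ _ x1 u1).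
    apply: (connect_trans (connect1 euv)).
    exact: conn_mono (adj_mono s2) (c2 _ _ v2 y2).
  move=> x y; rewrite !inE => /orP [x1|x2] /orP [y1|y2].
  + exact: conn_mono (adj_mono s1) (c1 _ _ x1 y1).
  + exact: h12.
  + by rewrite conn_sym; apply: h12.
  + exact: conn_mono (adj_mono s2) (c2 _ _ x2 y2).
- apply: bridges_acyclic => a b; rewrite !inE => /orP [/orP [ab1|ab2]|/eqP abuv].
  + exact: (glue_br d t1 g2 u1 v2 ab1).
  + have -> : E = E2 :|: E1 :|: [set [set v; u]] by rewrite /E (setUC E1) [[set v; u]]setUC.
    by apply: (glue_br _ t2 g1 v2 u1 ab2); rewrite disjoint_sym.
  + apply/negP => c.
    have := conn_hom (f := fun z => z \in S1) (e' := fun _ _ => false) _ c.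
    have ab : a != b.
      by have := cards2 a b; rewrite abuv cards2 uv => -[/eqP]; case: (a != b).
    have ain : a \in [set u; v] by rewrite -abuv !inE eqxx.
    have bin : b \in [set u; v] by rewrite -abuv !inE eqxx orbT.
    have vn : v \in S1 = false by apply: (disjointFl d).
    have -> : forall x y, connect (fun _ _ : bool => false) x y = (x == y).
      move=> x y; apply/connectP/eqP => [[[|? ?] //= _ ->] //|->]; by exists [::].
    have H : forall p q, adj (E :\ [set a; b]) p q -> (p \in S1) = (q \in S1) \/ false.
      move=> p q; rewrite /adj !inE abuv => /andP [ne /orP [/orP [pq1|pq2]|pquv]]; left.
      * have [/subsetP s _] := graphP g1 pq1; by rewrite !s ?inE ?eqxx ?orbT.
      * have [/subsetP s _] := graphP g2 pq2.
        by rewrite !(disjointFl d) ?s ?inE ?eqxx ?orbT.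
      * by rewrite pquv in ne.
    move/(_ H).
    move: ain bin ab; rewrite !inE => /orP [/eqP ->|/eqP ->] /orP [/eqP ->|/eqP ->];
    by rewrite ?eqxx ?u1 ?vn.
Qed.

End Nb.

Section Med.
Variable n : nat.
Implicit Types (E F : {set {set 'I_n}}) (S : {set 'I_n}).

Definition onp E w x y := (x == w) || (y == w) || ~~ connect (adj (Ew E w)) x y.
Definition med E r1 r2 r3 w := [&& onp E w r1 r2, onp E w r1 r3 & onp E w r2 r3].

Lemma Ew_mono E F w : E \subset F -> Ew E w \subset Ew F w.
Proof.
move=> sEF; apply/subsetP => f; rewrite !inE => /andP [fE ->].
by rewrite (subsetP sEF) .
Qed.

Lemma med_exists E r1 r2 r3 : is_tree [set: 'I_n] E -> exists w, med E r1 r2 r3 w.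
Proof.
move=> t; have [g c ac] := t.
have cE : forall x y, connect (adj E) x y by move=> x y; apply: c; rewrite inE.
pose A w := [set x | (x == w) || connect (adj (Ew E w)) x r1].
suff H : forall k w, n - #|A w| < k -> onp E w r1 r2 && onp E w r1 r3 ->
    exists m, med E r1 r2 r3 m.
  apply: (H n.+1 r1); first by rewrite ltnS leq_subr.
  by rewrite /onp !eqxx.
elim=> // k IH w lt Ww.
case H23: (onp E w r2 r3).
  by exists w; rewrite /med; case/andP: Ww => -> ->.
move/negbT: H23; rewrite /onp !negb_or negbK => /andP [/andP [r2w r3w] c23].
have [y wy yr2] := nb_exists (cE w r2) r2w.
have yw : y != w by rewrite eq_sym; apply: (adj_neq g wy).
case/andP: Ww => o12 o13.
have ny1 : ~~ connect (adj (Ew E w)) y r1.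
  apply/negP => yr1.
  case r1w: (r1 == w).
    move/eqP: r1w yr1 => ->; rewrite conn_sym => /isolated /eqP.
    by rewrite (negbTE yw).
  move: o12; rewrite /onp r1w (negbTE r2w) /= => /negP; apply.
  rewrite conn_sym in yr1; exact: connect_trans yr1 yr2.
have nyt : forall t, connect (adj (Ew E w)) t r1 -> t != y.
  by move=> t' tr; apply/eqP => ty; move: ny1; rewrite -ty tr.
have K : forall t, connect (adj (Ew E w)) t r1 -> connect (adj (Ew E y)) t r1.
  move=> t' tr; apply: (conn_mono_in (P := fun z => connect (adj (Ew E w)) z r1) _ tr tr) => a b ar1 ab.
  have br1 : connect (adj (Ew E w)) b r1.
    apply: connect_trans ar1; apply: connect1; by rewrite adj_sym.
  split => //.
  move: ab; rewrite /adj /Ew !inE => /andP [abE _]; rewrite abE /= negb_or.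
  by rewrite eq_sym (nyt _ ar1) eq_sym (nyt _ br1).
have wA : connect (adj (Ew E y)) w r1.
  case r1w: (r1 == w); first by move/eqP: r1w => ->; exact: connect0.
  have [z wz zr1] := nb_exists (cE w r1) (negbT r1w).
  apply: (@connect_trans _ _ z); last exact: K.
  apply: connect1; rewrite /adj /Ew !inE wz negb_or /= (negbTE yw) /=.
  by apply: contraNneq ny1 => ->.
have Wy : forall r, connect (adj (Ew E w)) y r -> onp E y r1 r.
  move=> r yr; rewrite /onp; case ry: (r == y); first by rewrite orbT.
  case r1y: (r1 == y) => //=.
  apply/negP => r1r.
  have [t' yt tr] := nb_exists yr (negbT ry).
  have tr' : connect (adj (Ew E y)) t' r.
    exact: conn_mono (adj_mono (Ew_mono y (Ew_sub E w))) tr.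
  have ytE : [set y; t'] \in E := subsetP (Ew_sub E w) _ yt.
  have wt : w = t'.
    apply: (nb_unique g ac (w := y)) => //; first by rewrite setUC.
    apply: connect_trans wA _; apply: connect_trans r1r _; by rewrite conn_sym.
  by move: yt; rewrite /Ew inE -wt !inE eqxx orbT andbF.
have Wy' : onp E y r1 r2 && onp E y r1 r3.
  by rewrite !Wy //; exact: connect_trans yr2 c23.
have ltA : #|A w| < #|A y|.
  apply: proper_card; apply/properP; split.
    apply/subsetP => x; rewrite !inE => /orP [/eqP ->|xr1]; apply/orP; right;
    [exact: wA | exact: K].
  exists y; first by rewrite inE eqxx.
  by rewrite inE negb_or yw ny1.
apply: (IH y) => //.
have := max_card (A y); rewrite card_ord => hy.
lia.
Qed.

End Med.

Section Aux.
Variable n : nat.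
Implicit Types (E F : {set {set 'I_n}}) (S : {set 'I_n}).

Lemma tree_empty E : is_tree set0 E -> E = set0.
Proof.
case=> g _ _; apply/setP => f; rewrite inE; apply/negP => fE.
have [sf cf] := graphP g fE.
by move: sf cf; rewrite subset0 => /eqP ->; rewrite cards0.
Qed.

Lemma disjU (A B C : {set 'I_n}) : [disjoint A & C] -> [disjoint B & C] -> [disjoint A :|: B & C].
Proof. by rewrite -!setI_eq0 setIUl => /eqP -> /eqP ->; rewrite setU0. Qed.

Lemma sub_conn S E' F w x y : is_tree S E' -> E' \subset F -> w \notin S ->
  x \in S -> y \in S -> connect (adj (Ew F w)) x y.
Proof.
move=> [g c _] sub wS xS yS; apply: conn_mono (c x y xS yS) => a b ab.
rewrite /adj /Ew inE (subsetP sub _ ab) /=.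
have [/subsetP s _] := graphP g ab.
by apply: contra wS => /s.
Qed.

Lemma edge_disj S E' e (A B : {set 'I_n}) : is_graph_on S E' -> e \in E' ->
  e \subset A -> e \subset B -> [disjoint A & B] -> False.
Proof.
move=> g eE /subsetP sA /subsetP sB d.
have [_ /eqP /cards2P [x [y [_ exy]]]] := graphP g eE.
have xe : x \in e by rewrite exy !inE eqxx.
by move: (disjointFr d (sA _ xe)); rewrite (sB _ xe).
Qed.

End Aux.

Section Struct.
Set Default Proof Using "All".
Variable n : nat.
Variables (V1 V2 V3 : {set 'I_n}) (E1 E2 E3 : {set {set 'I_n}}) (a1 a2 : 'I_n)
  (o2 o3 : option ('I_n * 'I_n)).
Hypotheses (t1 : is_tree V1 E1) (a1V : a1 \in V1) (a2V : a2 \in V1)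
  (v2 : valid_drt (V2, E2, o2)) (v3 : valid_drt (V3, E3, o3))
  (d12 : [disjoint V1 & V2]) (d13 : [disjoint V1 & V3]) (d23 : [disjoint V2 & V3])
  (cov : V1 :|: V2 :|: V3 = [set: 'I_n]).

Local Notation g2 := (oapp (fun b => [set [set a1; b.2]]) set0 o2).
Local Notation g3 := (oapp (fun c => [set [set a1; c.1]]) set0 o3).
Local Notation E := (E1 :|: E2 :|: g2 :|: E3 :|: g3).
Local Notation r1 := (oapp fst a1 o2).
Local Notation r2 := (oapp snd a1 o3).

Lemma st_t2 : is_tree V2 E2. Proof. by move: v2 => /= []. Qed.
Lemma st_t3 : is_tree V3 E3. Proof. by move: v3 => /= []. Qed.

Lemma st_o2 : (o2 = None /\ V2 = set0) \/
  exists b1 b2, [/\ o2 = Some (b1, b2), b1 \in V2 & b2 \in V2].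
Proof.
move: v2 => /=; case: o2 => [[b1 b2]|] [_ h]; [right; exists b1, b2; case: h | left].
by [].
by [].
Qed.

Lemma st_o3 : (o3 = None /\ V3 = set0) \/
  exists c1 c2, [/\ o3 = Some (c1, c2), c1 \in V3 & c2 \in V3].
Proof.
move: v3 => /=; case: o3 => [[c1 c2]|] [_ h]; [right; exists c1, c2; case: h | left].
by [].
by [].
Qed.

Lemma s1E : E1 \subset E. Proof. by apply/subsetP => f fe; rewrite !inE fe. Qed.
Lemma s2E : E2 \subset E. Proof. by apply/subsetP => f fe; rewrite !inE fe !orbT. Qed.
Lemma s3E : E3 \subset E. Proof. by apply/subsetP => f fe; rewrite !inE fe !orbT. Qed.

Lemma a1n2 : a1 \notin V2. Proof. by rewrite (disjointFr d12 a1V). Qed.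
Lemma a1n3 : a1 \notin V3. Proof. by rewrite (disjointFr d13 a1V). Qed.

Lemma st_tree : is_tree [set: 'I_n] E.
Proof.
have t12 : is_tree (V1 :|: V2) (E1 :|: E2 :|: g2).
  case: st_o2 => [[o2N V2N]|[b1 [b2 [o2S b1V b2V]]]]; rewrite ?o2N ?o2S /=.
    have E2N : E2 = set0 by apply: tree_empty; rewrite -V2N; exact: st_t2.
    by rewrite V2N E2N !setU0.
  exact: glue_tree d12 t1 st_t2 a1V b2V.
case: st_o3 => [[o3N V3N]|[c1 [c2 [o3S c1V c2V]]]]; rewrite ?o3N ?o3S /=.
  have E3N : E3 = set0 by apply: tree_empty; rewrite -V3N; exact: st_t3.
  by rewrite E3N !setU0 -cov V3N setU0.
rewrite -cov; apply: glue_tree => //; first exact: disjU.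
  exact: st_t3.
by rewrite inE a1V.
Qed.

Lemma st_edge e : e \in E -> [\/ (a1 \in e) && ~~ (e \subset V1), e \in E1, e \in E2 | e \in E3].
Proof.
rewrite !inE => /orP [/orP [/orP [/orP [h|h]|h]|h]|h].
- by constructor 2.
- by constructor 3.
- case: st_o2 h => [[-> _]|[b1 [b2 [-> _ b2V]]]]; rewrite ?inE //= => /eqP ->.
  constructor 1; rewrite !inE eqxx /=; apply/negP => /subsetP /(_ b2).
  by rewrite !inE eqxx orbT (disjointFl d12 b2V) => /(_ isT).
- by constructor 4.
- case: st_o3 h => [[-> _]|[c1 [c2 [-> c1V _]]]]; rewrite ?inE //= => /eqP ->.
  constructor 1; rewrite !inE eqxx /=; apply/negP => /subsetP /(_ c1).
  by rewrite !inE eqxx orbT (disjointFl d13 c1V) => /(_ isT).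
Qed.

Lemma st_closed2 x y : x \in V2 -> connect (adj (Ew E a1)) x y -> y \in V2.
Proof.
move=> xV c; apply: (conn_closed (P := fun z => z \in V2) _ xV c) => p q pV.
rewrite /adj /Ew inE => /andP [pqE a1n].
have pS : forall (S : {set 'I_n}) E', is_graph_on S E' -> [set p; q] \in E' ->
    p \in S /\ q \in S.
  by move=> S E' g h; have /andP [] := adj_in g h.
case: (st_edge pqE) => h.
- by case/andP: h => h _; rewrite h in a1n.
- by have [pV1 _] := pS _ _ (tree_graph t1) h; rewrite (disjointFr d12 pV1) in pV.
- by have [_ ->] := pS _ _ (tree_graph st_t2) h.
- by have [pV3 _] := pS _ _ (tree_graph st_t3) h; rewrite (disjointFl d23 pV3) in pV.
Qed.


Lemma st_closed3 x y : x \in V3 -> connect (adj (Ew E a1)) x y -> y \in V3.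
Proof.
move=> xV c; apply: (conn_closed (P := fun z => z \in V3) _ xV c) => p q pV.
rewrite /adj /Ew inE => /andP [pqE a1n].
have pS : forall (S : {set 'I_n}) E', is_graph_on S E' -> [set p; q] \in E' ->
    p \in S /\ q \in S.
  by move=> S E' g h; have /andP [] := adj_in g h.
case: (st_edge pqE) => h.
- by case/andP: h => h _; rewrite h in a1n.
- by have [pV1 _] := pS _ _ (tree_graph t1) h; rewrite (disjointFr d13 pV1) in pV.
- by have [pV2 _] := pS _ _ (tree_graph st_t2) h; rewrite (disjointFr d23 pV2) in pV.
- by have [_ ->] := pS _ _ (tree_graph st_t3) h.
Qed.

Lemma st_R1 w : w \notin V2 -> w != a1 -> connect (adj (Ew E w)) r1 a1.
Proof.
move=> wV wa; case: st_o2 => [[o2N _]|[b1 [b2 [o2S b1V b2V]]]].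
  by rewrite o2N; exact: connect0.
have r1b : oapp fst a1 o2 = b1 by rewrite o2S.
rewrite r1b; apply: (@connect_trans _ _ b2); first exact: sub_conn st_t2 s2E wV b1V b2V.
have g2m : [set a1; b2] \in E by rewrite o2S !inE eqxx !orbT.
apply: connect1; rewrite /adj /Ew inE setUC g2m /= !inE negb_or wa /=.
by apply/eqP => e; move: wV; rewrite e b2V.
Qed.

Lemma st_R2 w : w \notin V3 -> w != a1 -> connect (adj (Ew E w)) r2 a1.
Proof.
move=> wV wa; case: st_o3 => [[o3N _]|[c1 [c2 [o3S c1V c2V]]]].
  by rewrite o3N; exact: connect0.
have r2c : oapp snd a1 o3 = c2 by rewrite o3S.
rewrite r2c; apply: (@connect_trans _ _ c1); first exact: sub_conn st_t3 s3E wV c2V c1V.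
have g3m : [set a1; c1] \in E by rewrite o3S !inE eqxx !orbT.
apply: connect1; rewrite /adj /Ew inE setUC g3m /= !inE negb_or wa /=.
by apply/eqP => e; move: wV; rewrite e c1V.
Qed.

Lemma st_R3 w : w \notin V1 -> connect (adj (Ew E w)) a2 a1.
Proof. by move=> wV; apply: sub_conn t1 s1E wV a2V a1V. Qed.

Lemma r1ne w : w \notin V2 -> w != a1 -> r1 != w.
Proof.
move=> wV wa; case: st_o2 => [[o2N _]|[b1 [b2 [o2S b1V b2V]]]].
  by rewrite o2N /= eq_sym.
by rewrite o2S /=; apply/eqP => e; move: wV; rewrite -e b1V.
Qed.

Lemma r2ne w : w \notin V3 -> w != a1 -> r2 != w.
Proof.
move=> wV wa; case: st_o3 => [[o3N _]|[c1 [c2 [o3S c1V c2V]]]].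
  by rewrite o3N /= eq_sym.
by rewrite o3S /=; apply/eqP => e; move: wV; rewrite -e c2V.
Qed.

Lemma st_r1V : r1 = a1 \/ r1 \in V2.
Proof. by case: st_o2 => [[-> _]|[b1 [b2 [-> b1V _]]]]; [left|right]. Qed.

Lemma st_r2V : r2 = a1 \/ r2 \in V3.
Proof. by case: st_o3 => [[-> _]|[c1 [c2 [-> _ c2V]]]]; [left|right]. Qed.

Lemma st_med : med E r1 r2 a2 a1.
Proof.
have h12 : onp E a1 r1 r2.
  rewrite /onp; case: st_r1V => [->|r1V]; first by rewrite eqxx.
  case: st_r2V => [->|r2V]; first by rewrite eqxx orbT.
  apply/orP; right; apply/negP => c; have := st_closed2 r1V c.
  by rewrite (disjointFl d23 r2V).
have h13 : onp E a1 r1 a2.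
  rewrite /onp; case: st_r1V => [->|r1V]; first by rewrite eqxx.
  apply/orP; right; apply/negP => c; have := st_closed2 r1V c.
  by rewrite (disjointFr d12 a2V).
have h23 : onp E a1 r2 a2.
  rewrite /onp; case: st_r2V => [->|r2V]; first by rewrite eqxx.
  apply/orP; right; apply/negP => c; have := st_closed3 r2V c.
  by rewrite (disjointFr d13 a2V).
by rewrite /med h12 h13 h23.
Qed.

Lemma st_med_uniq w : med E r1 r2 a2 w -> w = a1.
Proof.
case/and3P => o12 o13 o23; apply/eqP/negPn/negP => wa.
have : w \in [set: 'I_n] by rewrite inE.
rewrite -cov !inE => /orP [/orP [wV|wV]|wV].
- have n2 : w \notin V2 by rewrite (disjointFr d12 wV).
  have n3 : w \notin V3 by rewrite (disjointFr d13 wV).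
  move: o12; rewrite /onp (negbTE (r1ne n2 wa)) (negbTE (r2ne n3 wa)) /= => /negP; apply.
  apply: connect_trans (st_R1 n2 wa) _; rewrite conn_sym; exact: st_R2 n3 wa.
- have n1 : w \notin V1 by rewrite (disjointFl d12 wV).
  have n3 : w \notin V3 by rewrite (disjointFr d23 wV).
  have a2w : a2 != w by apply/eqP => e; move: n1; rewrite -e a2V.
  move: o23; rewrite /onp (negbTE (r2ne n3 wa)) (negbTE a2w) /= => /negP; apply.
  apply: connect_trans (st_R2 n3 wa) _; rewrite conn_sym; exact: st_R3 n1.
- have n1 : w \notin V1 by rewrite (disjointFl d13 wV).
  have n2 : w \notin V2 by rewrite (disjointFl d23 wV).
  have a2w : a2 != w by apply/eqP => e; move: n1; rewrite -e a2V.
  move: o13; rewrite /onp (negbTE (r1ne n2 wa)) (negbTE a2w) /= => /negP; apply.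
  apply: connect_trans (st_R1 n2 wa) _; rewrite conn_sym; exact: st_R3 n1.
Qed.

Lemma st_V2 : V2 = [set x | (r1 != a1) && connect (adj (Ew E a1)) x r1].
Proof.
apply/setP => x; rewrite inE.
case: st_o2 => [[o2N V2N]|[b1 [b2 [o2S b1V b2V]]]].
  by rewrite V2N inE o2N /= eqxx.
have r1b : oapp fst a1 o2 = b1 by rewrite o2S.
rewrite r1b.
have -> : b1 != a1 by apply/eqP => e; move: a1n2; rewrite -e b1V.
rewrite /=; apply/idP/idP => [xV|c].
  exact: sub_conn st_t2 s2E a1n2 xV b1V.
by rewrite conn_sym in c; apply: st_closed2 b1V c.
Qed.

Lemma st_V3 : V3 = [set x | (r2 != a1) && connect (adj (Ew E a1)) x r2].
Proof.
apply/setP => x; rewrite inE.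
case: st_o3 => [[o3N V3N]|[c1 [c2 [o3S c1V c2V]]]].
  by rewrite V3N inE o3N /= eqxx.
have r2c : oapp snd a1 o3 = c2 by rewrite o3S.
rewrite r2c.
have -> : c2 != a1 by apply/eqP => e; move: a1n3; rewrite -e c2V.
rewrite /=; apply/idP/idP => [xV|c].
  exact: sub_conn st_t3 s3E a1n3 xV c2V.
by rewrite conn_sym in c; apply: st_closed3 c2V c.
Qed.

Lemma st_V1 : V1 = ~: (V2 :|: V3).
Proof.
apply/setP => x; rewrite !inE; apply/idP/idP => [xV|].
  by rewrite (disjointFr d12 xV) (disjointFr d13 xV).
rewrite negb_or => /andP [n2 n3].
have : x \in [set: 'I_n] by rewrite inE.
by rewrite -cov !inE (negbTE n2) (negbTE n3) !orbF.
Qed.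

Lemma st_E1 : E1 = [set e in E | e \subset V1].
Proof.
apply/setP => e; rewrite inE; apply/idP/andP => [eE|[eE sV]].
  by split; [exact: (subsetP s1E) | exact: (graphP (tree_graph t1) eE).1].
case: (st_edge eE) => // h.
- by case/andP: h => _; rewrite sV.
- case: (edge_disj (tree_graph st_t2) h (graphP (tree_graph st_t2) h).1 sV).
  by rewrite disjoint_sym.
- case: (edge_disj (tree_graph st_t3) h (graphP (tree_graph st_t3) h).1 sV).
  by rewrite disjoint_sym.
Qed.

Lemma st_E2 : E2 = [set e in E | e \subset V2].
Proof.
apply/setP => e; rewrite inE; apply/idP/andP => [eE|[eE sV]].
  by split; [exact: (subsetP s2E) | exact: (graphP (tree_graph st_t2) eE).1].
case: (st_edge eE) => // h.
- case/andP: h => a1e _; move: a1n2; by rewrite (subsetP sV _ a1e).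
- by case: (edge_disj (tree_graph t1) h (graphP (tree_graph t1) h).1 sV).
- case: (edge_disj (tree_graph st_t3) h (graphP (tree_graph st_t3) h).1 sV).
  by rewrite disjoint_sym.
Qed.

Lemma st_E3 : E3 = [set e in E | e \subset V3].
Proof.
apply/setP => e; rewrite inE; apply/idP/andP => [eE|[eE sV]].
  by split; [exact: (subsetP s3E) | exact: (graphP (tree_graph st_t3) eE).1].
case: (st_edge eE) => // h.
- case/andP: h => a1e _; move: a1n3; by rewrite (subsetP sV _ a1e).
- by case: (edge_disj (tree_graph t1) h (graphP (tree_graph t1) h).1 sV).
- by case: (edge_disj (tree_graph st_t2) h (graphP (tree_graph st_t2) h).1 sV).
Qed.

Lemma st_o2S b1 b2 : o2 = Some (b1, b2) ->
  [/\ r1 = b1, r1 != a1, [set a1; b2] \in E & connect (adj (Ew E a1)) b2 r1].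
Proof.
move=> o2S; have [[o2N _]|[b1' [b2' [o2S' b1V b2V]]]] := st_o2; first by rewrite o2S in o2N.
rewrite o2S in o2S'; case: o2S' => e1 e2; rewrite -e1 -e2 in b1V b2V.
have r1b : oapp fst a1 o2 = b1 by rewrite o2S.
rewrite r1b; split => //.
- by apply/eqP => e; move: a1n2; rewrite -e b1V.
- by rewrite o2S !inE eqxx !orbT.
- exact: sub_conn st_t2 s2E a1n2 b2V b1V.
Qed.

Lemma st_o3S c1 c2 : o3 = Some (c1, c2) ->
  [/\ r2 = c2, r2 != a1, [set a1; c1] \in E & connect (adj (Ew E a1)) c1 r2].
Proof.
move=> o3S; have [[o3N _]|[c1' [c2' [o3S' c1V c2V]]]] := st_o3; first by rewrite o3S in o3N.
rewrite o3S in o3S'; case: o3S' => e1 e2; rewrite -e1 -e2 in c1V c2V.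
have r2c : oapp snd a1 o3 = c2 by rewrite o3S.
rewrite r2c; split => //.
- by apply/eqP => e; move: a1n3; rewrite -e c2V.
- by rewrite o3S !inE eqxx !orbT.
- exact: sub_conn st_t3 s3E a1n3 c1V c2V.
Qed.

End Struct.

Section Dec.
Variable n : nat.
Implicit Types (E F : {set {set 'I_n}}) (S C : {set 'I_n}).

Definition subE E C := [set e in E | e \subset C].

Lemma tree_sub S E C : is_tree S E ->
  (forall x y, x \in C -> y \in C -> connect (adj (subE E C)) x y) -> is_tree C (subE E C).
Proof.
move=> [g _ ac] cC; split => //.
- apply/forallP => e; apply/implyP; rewrite inE => /andP [eE ->] /=.
  by rewrite (graphP g eE).2.
- move=> [s /and3P [us ss cs]]; apply: ac; exists s; rewrite us ss /=.
  by apply: sub_cycle cs; apply: adj_mono; apply/subsetP => e; rewrite inE => /andP [].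
Qed.

Lemma decomp E r1 r2 r3 : is_tree [set: 'I_n] E ->
  exists V1 V2 V3 E1 E2 E3 a1 o2 o3,
  [/\ [/\ is_tree V1 E1, a1 \in V1, r3 \in V1,
        valid_drt (V2, E2, o2) & valid_drt (V3, E3, o3)],
      [/\ [disjoint V1 & V2], [disjoint V1 & V3], [disjoint V2 & V3] &
          V1 :|: V2 :|: V3 = [set: 'I_n]],
      E = E1 :|: E2 :|: oapp (fun b => [set [set a1; b.2]]) set0 o2 :|: E3
           :|: oapp (fun c => [set [set a1; c.1]]) set0 o3,
      r1 = oapp fst a1 o2 & r2 = oapp snd a1 o3].
Proof.
move=> t; have [g c ac] := t.
have cE : forall x y, connect (adj E) x y by move=> x y; apply: c; rewrite inE.
have [m /and3P [o12 o13 o23]] := med_exists r1 r2 r3 t.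
pose C r := [set x | (r != m) && connect (adj (Ew E m)) x r].
have Ccl : forall r x y, x \in C r -> connect (adj (Ew E m)) x y -> y \in C r.
  move=> r x y; rewrite !inE => /andP [-> xr] xy /=.
  by apply: connect_trans xr; rewrite conn_sym.
have Ct : forall r, is_tree (C r) (subE E (C r)).
  move=> r; apply: (tree_sub t) => x y xC yC.
  have : connect (adj (Ew E m)) x y.
    move: xC yC; rewrite !inE => /andP [_ xr] /andP [_ yr].
    by apply: connect_trans xr _; rewrite conn_sym.
  move=> cxy; apply: (conn_mono_in (P := fun z => z \in C r) _ xC cxy) => a b aC ab.
  have bC : b \in C r by apply: Ccl aC (connect1 ab).
  split => //; move: ab; rewrite /adj /subE /Ew !inE => /andP [-> _] /=.
  by apply/subsetP => z /set2P [->|->].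
have mC : forall r, m \notin C r.
  move=> r; rewrite inE; apply/negP => /andP [rm /isolated e].
  by rewrite e eqxx in rm.
set V2 := C r1; set V3 := C r2; set V1 := ~: (V2 :|: V3).
have d23 : [disjoint V2 & V3].
  rewrite -setI_eq0; apply/eqP/setP => x; rewrite !inE.
  apply/negP => /andP [/andP [r1m x1] /andP [r2m x2]].
  move: o12; rewrite /onp (negbTE r1m) (negbTE r2m) /= => /negP; apply.
  by apply: connect_trans x2; rewrite conn_sym.
have d12 : [disjoint V1 & V2].
  rewrite -setI_eq0; apply/eqP/setP => x; rewrite /V1 in_setI in_setC in_setU in_set0.
  by case h: (x \in V2); rewrite ?h /= ?andbF.
have d13 : [disjoint V1 & V3].
  rewrite -setI_eq0; apply/eqP/setP => x; rewrite /V1 in_setI in_setC in_setU in_set0.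
  by case h: (x \in V3); rewrite ?h /= ?orbT ?andbF.
have cov : V1 :|: V2 :|: V3 = [set: 'I_n].
  apply/setP => x; rewrite /V1 !in_setU in_setC in_setU in_setT.
  by case h: (x \in V2); case h3: (x \in V3); rewrite ?h ?h3 /= ?orbT.
have mV1 : m \in V1 by rewrite /V1 in_setC in_setU negb_or mC mC.
have r3V1 : r3 \in V1.
  rewrite !inE negb_or; apply/andP; split; apply/negP => /andP [rm r3r].
  - move: o13; rewrite /onp (negbTE rm) /=; case r3m: (r3 == m) => /=.
      by move/eqP: r3m r3r => -> /isolated e; rewrite e eqxx in rm.
    by rewrite conn_sym r3r.
  - move: o23; rewrite /onp (negbTE rm) /=; case r3m: (r3 == m) => /=.
      by move/eqP: r3m r3r => -> /isolated e; rewrite e eqxx in rm.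
    by rewrite conn_sym r3r.
have t1 : is_tree V1 (subE E V1).
  apply: (tree_sub t).
  suff xm : forall x, x \in V1 -> connect (adj (subE E V1)) x m.
    by move=> x y xV yV; apply: connect_trans (xm x xV) _; rewrite conn_sym; apply: xm.
  move=> x xV; case xm: (x == m); first by rewrite (eqP xm); exact: connect0.
  have [z mz zx] := nb_exists (cE m x) (negbT xm).
  have PV : forall t, connect (adj (Ew E m)) t x -> t \in V1.
    move=> t' tx; move: xV; rewrite !inE !negb_or => /andP [n2 n3].
    apply/andP; split; apply/negP => /andP [rm tr]; [move/negP: n2 | move/negP: n3];
    by apply; rewrite rm /=; apply: connect_trans _ tr; rewrite conn_sym.
  rewrite conn_sym; apply: (@connect_trans _ _ z).
    apply: connect1; rewrite /adj /subE inE mz /=.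
    apply/subsetP => w /set2P [->|->] //; exact: PV.
  apply: (conn_mono_in (P := fun u => connect (adj (Ew E m)) u x) _ zx zx) => a b ax ab.
  have bx : connect (adj (Ew E m)) b x.
    by apply: connect_trans ax; apply: connect1; rewrite adj_sym.
  split => //; move: ab; rewrite /adj /subE /Ew !inE => /andP [-> _] /=.
  by apply/subsetP => w /set2P [->|->]; apply: PV.
have [o2 Ho2] : exists o2, (o2 = None /\ r1 = m) \/ exists y, [/\ o2 = Some (r1, y),
    r1 != m, [set m; y] \in E & connect (adj (Ew E m)) y r1].
  case r1m: (r1 == m); first by exists None; left; split => //; apply/eqP.
  have [y my yr] := nb_exists (cE m r1) (negbT r1m).
  by exists (Some (r1, y)); right; exists y; split => //; rewrite r1m.
have [o3 Ho3] : exists o3, (o3 = None /\ r2 = m) \/ exists y, [/\ o3 = Some (y, r2),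
    r2 != m, [set m; y] \in E & connect (adj (Ew E m)) y r2].
  case r2m: (r2 == m); first by exists None; left; split => //; apply/eqP.
  have [y my yr] := nb_exists (cE m r2) (negbT r2m).
  by exists (Some (y, r2)); right; exists y; split => //; rewrite r2m.
exists V1, V2, V3, (subE E V1), (subE E V2), (subE E V3), m, o2, o3.
split => //.
- split => //.
  + case: Ho2 => [[-> r1m]|[y [-> r1m my yr]]] /=; split; try exact: Ct.
      by apply/setP => x; rewrite !inE r1m eqxx.
    by rewrite !inE r1m connect0 yr.
  + case: Ho3 => [[-> r2m]|[y [-> r2m my yr]]] /=; split; try exact: Ct.
      by apply/setP => x; rewrite !inE r2m eqxx.
    by rewrite !inE r2m connect0 yr.
- apply/setP => e; apply/idP/idP.
  + move=> eE; have [_ /eqP /cards2P [p [q [pq ee]]]] := graphP g eE.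
    have sub_in : forall V : {set 'I_n}, e \subset V -> e \in subE E V by move=> V sV; rewrite inE eE sV.
    rewrite !in_setU.
    case pm: (m \in e).
    * have [q' eq'] : exists q', e = [set m; q'].
        move: pm; rewrite ee !inE => /orP [/eqP mp|/eqP mq].
          by exists q; rewrite mp.
        by exists p; rewrite mq setUC.
      have mq'E : [set m; q'] \in E by rewrite -eq'.
      have q'm : m != q' := adj_neq g mq'E.
      case h2: (q' \in V2).
        move: h2; rewrite inE => /andP [r1m q'r].
        case: Ho2 => [[_ r1m']|[y [o2S _ my yr]]]; first by rewrite r1m' eqxx in r1m.
        have yq : y = q'.
          apply: (nb_unique g ac my mq'E); apply: connect_trans yr _; by rewrite conn_sym.
        by rewrite o2S /= in_set1 eq' yq eqxx !orbT.
      case h3: (q' \in V3).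
        move: h3; rewrite inE => /andP [r2m q'r].
        case: Ho3 => [[_ r2m']|[y [o3S _ my yr]]]; first by rewrite r2m' eqxx in r2m.
        have yq : y = q'.
          apply: (nb_unique g ac my mq'E); apply: connect_trans yr _; by rewrite conn_sym.
        by rewrite o3S /= in_set1 eq' yq eqxx !orbT.
      rewrite sub_in //; rewrite eq'; apply/subsetP => z /set2P [->|->] //.
      by rewrite /V1 in_setC in_setU h2 h3.
    * have epq : adj (Ew E m) p q by rewrite /adj /Ew inE -ee eE pm.
      have eqp : adj (Ew E m) q p by rewrite adj_sym.
      have iff : forall r, (p \in C r) = (q \in C r).
        move=> r; apply/idP/idP => h; [exact: Ccl h (connect1 epq)|exact: Ccl h (connect1 eqp)].
      case h2: (p \in V2).
        rewrite (sub_in V2) ?orbT //; rewrite ee; apply/subsetP => z /set2P [->|->] //.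
        by rewrite -(iff r1).
      case h3: (p \in V3).
        rewrite (sub_in V3) ?orbT //; rewrite ee; apply/subsetP => z /set2P [->|->] //.
        by rewrite -(iff r2).
      rewrite sub_in //; rewrite ee; apply/subsetP => z /set2P [->|->].
        by rewrite /V1 in_setC in_setU h2 h3.
      by rewrite /V1 in_setC in_setU -(iff r1) -(iff r2) h2 h3.
  + rewrite !in_setU => /orP [/orP [/orP [/orP [h|h]|h]|h]|h];
      try by move: h; rewrite inE => /andP [].
    * by case: Ho2 h => [[-> _]|[y [-> _ my _]]]; rewrite /= ?in_set0 // in_set1 => /eqP ->.
    * by case: Ho3 h => [[-> _]|[y [-> _ my _]]]; rewrite /= ?in_set0 // in_set1 => /eqP ->.
- by case: Ho2 => [[-> ->]|[y [-> _ _ _]]].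
- by case: Ho3 => [[-> ->]|[y [-> _ _ _]]].
Qed.

End Dec.

Definition gl n (x0 : 'I_n) (q : DRT_raw n * DRT_raw n * DRT_raw n) :
  {set {set 'I_n}} * 'I_n * 'I_n * 'I_n :=
  let a1 := oapp fst x0 q.1.1.2 in
  (q.1.1.1.2 :|: q.1.2.1.2 :|: oapp (fun b => [set [set a1; b.2]]) set0 q.1.2.2
     :|: q.2.1.2 :|: oapp (fun c => [set [set a1; c.1]]) set0 q.2.2,
   oapp fst a1 q.1.2.2, oapp snd a1 q.2.2, oapp snd x0 q.1.1.2).

Lemma sig_eq (A : Type) (P : A -> Prop) (u v : {x | P x}) : proj1_sig u = proj1_sig v -> u = v.
Proof. case: u v => x p [y q] /= e; subst; f_equal; apply: proof_irrelevance. Qed.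

Lemma gl_good n (q : DRT_raw n * DRT_raw n * DRT_raw n) : Qn_pred q ->
  exists V1 V2 V3 E1 E2 E3 a1 a2 o2 o3,
  q = ((V1, E1, Some (a1, a2)), (V2, E2, o2), (V3, E3, o3)) /\
  [/\ [/\ is_tree V1 E1, a1 \in V1, a2 \in V1, valid_drt (V2, E2, o2) & valid_drt (V3, E3, o3)] &
      [/\ [disjoint V1 & V2], [disjoint V1 & V3], [disjoint V2 & V3] &
          V1 :|: V2 :|: V3 = [set: 'I_n]]].
Proof.
case: q => [[[[V1 E1] o1] [[V2 E2] o2]] [[V3 E3] o3]] /= [v1 v2 v3 dd ne].
case: o1 v1 dd ne => [[a1 a2]|] [t1 r] dd ne; last by rewrite /drt_vertices /= r eqxx in ne.
case: r => a1V a2V.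
by exists V1, V2, V3, E1, E2, E3, a1, a2, o2, o3.
Qed.

Theorem theorem1 (n : nat) (hn : 1 <= n) :
  exists f : Qn n -> Tn n, bijective f.
Proof.
pose x0 : 'I_n := Ordinal hn.
have glT : forall q : Qn n, is_tree [set: 'I_n] (gl x0 (proj1_sig q)).1.1.1.
  case=> q Hq; have [V1 [V2 [V3 [E1 [E2 [E3 [a1 [a2 [o2 [o3 [qe [[t1 a1V a2V v2 v3] [d12 d13 d23 cov]]]]]]]]]]]]] := gl_good Hq.
  rewrite /= qe /=.
  exact: (st_tree t1 a1V a2V v2 v3 d12 d13 d23 cov).
pose f (q : Qn n) : Tn n := exist _ (gl x0 (proj1_sig q)) (glT q).
have finj : injective f.
  move=> [q Hq] [q' Hq'] /(congr1 (@proj1_sig _ _)) /=; rewrite /f /= => e.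
  apply: sig_eq => /=.
  have [V1 [V2 [V3 [E1 [E2 [E3 [a1 [a2 [o2 [o3 [qe [[t1 a1V a2V v2 v3] [d12 d13 d23 cov]]]]]]]]]]]]] := gl_good Hq.
  have [V1' [V2' [V3' [E1' [E2' [E3' [a1' [a2' [o2' [o3' [qe' [[t1' a1V' a2V' v2' v3'] [d12' d13' d23' cov']]]]]]]]]]]]] := gl_good Hq'.
  rewrite qe qe' /= in e *.
  case: e => eE er1 er2 ea2.
  have hm := st_med t1 a1V a2V v2 v3 d12 d13 d23 cov.
  rewrite eE er1 er2 ea2 in hm.
  have ea1 := st_med_uniq t1' a1V' a2V' v2' v3' d12' d13' d23' cov' hm.
  subst a1' a2'.
  have eV2 : V2 = V2'.
    by rewrite (st_V2 t1 a1V a2V v2 v3 d12 d13 d23 cov) (st_V2 t1' a1V' a2V' v2' v3' d12' d13' d23' cov') eE er1.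
  have eV3 : V3 = V3'.
    by rewrite (st_V3 t1 a1V a2V v2 v3 d12 d13 d23 cov) (st_V3 t1' a1V' a2V' v2' v3' d12' d13' d23' cov') eE er2.
  have eV1 : V1 = V1'.
    by rewrite (st_V1 t1 a1V a2V v2 v3 d12 d13 d23 cov) (st_V1 t1' a1V' a2V' v2' v3' d12' d13' d23' cov') eV2 eV3.
  have eE1 : E1 = E1'.
    by rewrite (st_E1 t1 a1V a2V v2 v3 d12 d13 d23 cov) (st_E1 t1' a1V' a2V' v2' v3' d12' d13' d23' cov') eE eV1.
  have eE2 : E2 = E2'.
    by rewrite (st_E2 t1 a1V a2V v2 v3 d12 d13 d23 cov) (st_E2 t1' a1V' a2V' v2' v3' d12' d13' d23' cov') eE eV2.
  have eE3 : E3 = E3'.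
    by rewrite (st_E3 t1 a1V a2V v2 v3 d12 d13 d23 cov) (st_E3 t1' a1V' a2V' v2' v3' d12' d13' d23' cov') eE eV3.
  have tE := st_tree t1' a1V' a2V' v2' v3' d12' d13' d23' cov'.
  have [gE _ acE] := tE.
  have eo2 : o2 = o2'.
    destruct o2 as [[b1 b2]|] eqn:Eo2; destruct o2' as [[b1' b2']|] eqn:Eo2'.
    - have [h1 _ h3 h4] := st_o2S t1 a1V a2V v2 v3 d12 d13 d23 cov (erefl _).
      have [h1' _ h3' h4'] := st_o2S t1' a1V' a2V' v2' v3' d12' d13' d23' cov' (erefl _).
      rewrite eE er1 in h3 h4.
      simpl in er1, h4, h4'; subst b1'.
      have eb : b2 = b2'.
        apply: (nb_unique gE acE h3 h3'); apply: connect_trans h4 _; by rewrite conn_sym.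
      by rewrite eb.
    - have [h1 h2 _ _] := st_o2S t1 a1V a2V v2 v3 d12 d13 d23 cov (erefl _).
      by rewrite er1 /= eqxx in h2.
    - have [h1 h2 _ _] := st_o2S t1' a1V' a2V' v2' v3' d12' d13' d23' cov' (erefl _).
      by rewrite -er1 /= eqxx in h2.
    - by [].
  have eo3 : o3 = o3'.
    destruct o3 as [[c1 c2]|] eqn:Eo3; destruct o3' as [[c1' c2']|] eqn:Eo3'.
    - have [h1 _ h3 h4] := st_o3S t1 a1V a2V v2 v3 d12 d13 d23 cov (erefl _).
      have [h1' _ h3' h4'] := st_o3S t1' a1V' a2V' v2' v3' d12' d13' d23' cov' (erefl _).
      rewrite eE er2 in h3 h4.
      simpl in er2, h4, h4'; subst c2'.
      have ec : c1 = c1'.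
        apply: (nb_unique gE acE h3 h3'); apply: connect_trans h4 _; by rewrite conn_sym.
      by rewrite ec.
    - have [h1 h2 _ _] := st_o3S t1 a1V a2V v2 v3 d12 d13 d23 cov (erefl _).
      by rewrite er2 /= eqxx in h2.
    - have [h1 h2 _ _] := st_o3S t1' a1V' a2V' v2' v3' d12' d13' d23' cov' (erefl _).
      by rewrite -er2 /= eqxx in h2.
    - by [].
  by rewrite eV1 eV2 eV3 eE1 eE2 eE3 eo2 eo3.
have fsurj : forall t, exists q, f q = t.
  case=> [[[[E r1] r2] r3] tE]; simpl in tE.
  have [V1 [V2 [V3 [E1 [E2 [E3 [m [o2 [o3 [[t1 mV r3V v2 v3] [d12 d13 d23 cov] eE e1 e2]]]]]]]]]] := decomp r1 r2 r3 tE.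
  have Hq : Qn_pred ((V1, E1, Some (m, r3)), (V2, E2, o2), (V3, E3, o3)).
    rewrite /Qn_pred /drt_vertices /=.
    apply: And5; [by split | exact: v2 | exact: v3 | by split | by apply/set0Pn; exists m].
  exists (exist _ _ Hq); apply: sig_eq => /=.
  by rewrite /gl /= eE e1 e2.
pose g t := proj1_sig (constructive_indefinite_description _ (fsurj t)).
have fg : cancel g f by move=> t; rewrite /g; case: constructive_indefinite_description.
exists f; apply: (Bijective (g := g)) => // q; apply: finj; exact: fg.
Qed.
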